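(* Under the standing assumptions below, let $\rho>0$, $\epsilon>0$, and let $(x_\epsilon,y_\epsilon,\lambda_\epsilon,z_\epsilon)\in\mathcal X\times\mathcal Y\times\Lambda\times\mathcal Y$ be an $\epsilon$-optimal solution of the min-max-min problem $\min_{x\in\mathcal X}\max_{y\in\mathcal Y,\lambda\in\Lambda}\min_{z\in\mathcal Y}P_\rho(x,y,\lambda,z)$. Then $$\Phi(x_\epsilon)\le\Phi_\rho^*+2\epsilon+\delta_\rho(x_\epsilon),\qquad f(x_\epsilon,y_\epsilon,\lambda_\epsilon)\ge\Phi^*-2\epsilon-\delta_\rho(x_\epsilon),$$ $$g(y_\epsilon,\lambda_\epsilon)-\min_{z\in\mathcal Y}g(z,\lambda_\epsilon)\le\rho^{-1}\big(f_{\rm hi}-\Phi^*+2\epsilon+\delta_\rho(x_\epsilon)\big).$$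
   Context: Standing setting. $\mathcal X\subset\mathbb R^{d_x}$, $\mathcal Y\subset\mathbb R^{d_y}$, $\Lambda\subset\mathbb R^{d_\lambda}$ are nonempty convex compact sets. $\bar f:\mathbb R^{d_x}\times\mathbb R^{d_y}\to\mathbb R$ is continuously differentiable with $\nabla\bar f$ Lipschitz on $\mathcal X\times\mathcal Y$; $A\in\mathbb R^{d_\lambda\times d_x}$, $B\in\mathbb R^{d_\lambda\times d_y}$, $c\in\mathbb R^{d_\lambda}$, and $f(x,y,\lambda):=\bar f(x,y)+\lambda^T(Ax+By-c)$. $g:\mathbb R^{d_y}\times\mathbb R^{d_\lambda}\to\mathbb R$ is continuously differentiable with $\nabla g$ Lipschitz on $\mathcal Y\times\Lambda$, and $g(\cdot,\lambda)$ is convex for each $\lambda\in\Lambda$. Definitions: $f_{\rm hi}:=\max_{\mathcal X\times\mathcal Y\times\Lambda}f$; $\mathcal F_{\rm low}:=\{(y,\lambda)\in\mathcal Y\times\Lambda:\ g(y,\lambda)=\min_{z\in\mathcal Y}g(z,\lambda)\}$; $h_g(y,\lambda):=g(y,\lambda)-\min_{z\in\mathcal Y}g(z,\lambda)$; $P_\rho(x,y,\lambda,z):=f(x,y,\lambda)-\rho(g(y,\lambda)-g(z,\lambda))$; $\Psi_\rho(x,y,\lambda):=\min_{z\in\mathcal Y}P_\rho(x,y,\lambda,z)$; $F_\rho(x):=\max_{y\in\mathcal Y,\lambda\in\Lambda}\Psi_\rho(x,y,\lambda)$; $\Phi_\rho^*:=\min_{x\in\mathcal X}F_\rho(x)$;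 $\Phi(x):=\max_{(y,\lambda)\in\mathcal F_{\rm low}}f(x,y,\lambda)$; $\Phi^*:=\min_{x\in\mathcal X}\Phi(x)$; $\delta_\rho(x):=|F_\rho(x)-\Phi(x)|$. A point $(x_\epsilon,y_\epsilon,\lambda_\epsilon,z_\epsilon)\in\mathcal X\times\mathcal Y\times\Lambda\times\mathcal Y$ is an $\epsilon$-optimal solution of $\min_{x}\max_{y,\lambda}\min_{z}P_\rho$ if (i) $P_\rho(x_\epsilon,y_\epsilon,\lambda_\epsilon,z_\epsilon)-\min_{z\in\mathcal Y}P_\rho(x_\epsilon,y_\epsilon,\lambda_\epsilon,z)\le\epsilon$, (ii) $\max_{y\in\mathcal Y,\lambda\in\Lambda}\min_{z\in\mathcal Y}P_\rho(x_\epsilon,y,\lambda,z)-P_\rho(x_\epsilon,y_\epsilon,\lambda_\epsilon,z_\epsilon)\le\epsilon$, (iii) $P_\rho(x_\epsilon,y_\epsilon,\lambda_\epsilon,z_\epsilon)-\Phi_\rho^*\le\epsilon$. *)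

(* Defs.v *)
From HB Require Import structures.
From mathcomp Require Import all_boot all_order all_algebra.
From mathcomp Require Import all_classical all_reals all_analysis.
Set Implicit Arguments. Unset Strict Implicit. Unset Printing Implicit Defensive.
Import Order.TTheory GRing.Theory Num.Theory.
Import numFieldNormedType.Exports.
Local Open Scope classical_set_scope.
Local Open Scope ring_scope.

Section Defs.
Variable R : realType.

Definition cvx_set (n : nat) (S : set 'rV[R]_n) : Prop :=
  forall a b t, S a -> S b -> 0 <= t -> t <= 1 -> S ((1 - t) *: a + t *: b).

Definition cvx_fun (n : nat) (h : 'rV[R]_n -> R) : Prop :=
  forall a b t, 0 <= t -> t <= 1 ->
    h ((1 - t) *: a + t *: b) <= (1 - t) * h a + t * h b.

Definition C1 (V : normedModType R) (h : V -> R) : Prop :=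
  (forall p, differentiable h p) /\ (forall v, continuous (fun p => 'd h p v)).

Definition grad_lipschitz_on (V : normedModType R) (h : V -> R) (S : set V) : Prop :=
  exists L : R, forall p q v, S p -> S q ->
    `|'d h p v - 'd h q v| <= L * `|p - q| * `|v|.

Definition dotr (n : nat) (u v : 'rV[R]_n) : R := \sum_(i < n) u 0 i * v 0 i.

Variables (dx dy dl : nat).
Variables (X : set 'rV[R]_dx) (Y : set 'rV[R]_dy) (Lam : set 'rV[R]_dl).
Variable fbar : 'rV[R]_dx * 'rV[R]_dy -> R.
Variables (A : 'M[R]_(dl, dx)) (B : 'M[R]_(dl, dy)) (c : 'rV[R]_dl).
Variable g : 'rV[R]_dy * 'rV[R]_dl -> R.

(* f(x,y,lambda) = fbar(x,y) + lambda^T (A x + B y - c) *)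
Definition fL (x : 'rV[R]_dx) (y : 'rV[R]_dy) (l : 'rV[R]_dl) : R :=
  fbar (x, y) + dotr l (x *m A^T + y *m B^T - c).

Definition f_hi : R :=
  sup [set fL t.1 t.2.1 t.2.2 | t in [set t | X t.1 /\ Y t.2.1 /\ Lam t.2.2]].

Definition gmin (l : 'rV[R]_dl) : R := inf [set g (z, l) | z in Y].

Definition F_low : set ('rV[R]_dy * 'rV[R]_dl) :=
  [set p | Y p.1 /\ Lam p.2 /\ g p = gmin p.2].

Definition h_g (y : 'rV[R]_dy) (l : 'rV[R]_dl) : R := g (y, l) - gmin l.

Definition P_rho (rho : R) x y l z : R := fL x y l - rho * (g (y, l) - g (z, l)).

Definition Psi_rho (rho : R) x y l : R := inf [set P_rho rho x y l z | z in Y].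

Definition F_rho (rho : R) x : R :=
  sup [set Psi_rho rho x p.1 p.2 | p in [set p | Y p.1 /\ Lam p.2]].

Definition Phi_rho_star (rho : R) : R := inf [set F_rho rho x | x in X].

Definition Phi x : R := sup [set fL x p.1 p.2 | p in F_low].

Definition Phi_star : R := inf [set Phi x | x in X].

Definition delta_rho (rho : R) x : R := `|F_rho rho x - Phi x|.

Definition eps_optimal (rho eps : R) x y l z : Prop :=
  [/\ X x /\ Y y /\ Lam l /\ Y z,
      P_rho rho x y l z - Psi_rho rho x y l <= eps,
      F_rho rho x - P_rho rho x y l z <= eps &
      P_rho rho x y l z - Phi_rho_star rho <= eps].

End Defs.

(* Main.v *)
Require Import Defs.
From HB Require Import structures.
From mathcomp Require Import all_boot all_order all_algebra.
From mathcomp Require Import all_classical all_reals all_analysis.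
From mathcomp Require Import lra.
Import Order.TTheory GRing.Theory Num.Theory.
Import numFieldNormedType.Exports.
Local Open Scope classical_set_scope.
Local Open Scope ring_scope.

Lemma cpt_bnd (R : realType) (T : topologicalType) (h : T -> R) (S : set T) :
  continuous h -> compact S -> exists M : R, 0 <= M /\ forall t, S t -> `|h t| <= M.
Proof.
move=> hc Sc.
have : compact (h @` S).
  apply: continuous_compact => //; exact: continuous_subspaceT.
move=> /compact_bounded [M0 [M0r HM]].
exists (`|M0| + 1); split; first by rewrite addr_ge0.
move=> t St; apply: (HM (`|M0| + 1)); last by exists t.
by rewrite (le_lt_trans (real_ler_norm M0r)) // ltrDl.
Qed.

Lemma cont_sum (R : realType) (T : topologicalType) n (F : 'I_n -> T -> R) :
  (forall i, continuous (F i)) -> continuous (fun t => \sum_(i < n) F i t).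
Proof.
elim: n F => [|n IH] F Fc.
  under eq_fun do rewrite big_ord0; exact: cst_continuous.
under eq_fun do rewrite big_ord_recr /=.
move=> t; apply: continuousD; first exact: (IH (fun i => F (widen_ord (leqnSn n) i))).
exact: Fc.
Qed.
Lemma cont_fL (R : realType) dx dy dl (fbar : 'rV[R]_dx * 'rV[R]_dy -> R)
  (A : 'M[R]_(dl, dx)) (B : 'M[R]_(dl, dy)) (c : 'rV[R]_dl) :
  C1 fbar -> continuous (fun t : 'rV[R]_dx * ('rV[R]_dy * 'rV[R]_dl) => fL fbar A B c t.1 t.2.1 t.2.2).
Proof.
move=> [fd _] t.
have h1 : continuous (fun t : 'rV[R]_dx * ('rV[R]_dy * 'rV[R]_dl) => fbar (t.1, t.2.1)).
  move=> u.
  have hp : {for u, continuous (fun t : 'rV[R]_dx * ('rV[R]_dy * 'rV[R]_dl) => (t.1, t.2.1))}.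
    apply: (@cvg_pair _ _ _ _ (nbhs u.1) (nbhs u.2.1)); first exact: cvg_fst.
    exact: (@continuous_comp _ _ _ snd fst u cvg_snd cvg_fst).
  exact: (continuous_comp hp (differentiable_continuous (fd _))).
have h2 : continuous (fun t : 'rV[R]_dx * ('rV[R]_dy * 'rV[R]_dl) => dotr t.2.2 (t.1 *m A^T + t.2.1 *m B^T - c)).
  have c1 j : continuous (fun t : 'rV[R]_dx * ('rV[R]_dy * 'rV[R]_dl) => t.1 0 j).
    move=> u; exact: (@continuous_comp _ _ _ fst (fun M : 'rV[R]_dx => M 0 j) u cvg_fst (@coord_continuous _ _ _ _ _ _)).
  have c2 j : continuous (fun t : 'rV[R]_dx * ('rV[R]_dy * 'rV[R]_dl) => t.2.1 0 j).
    move=> u; apply: (@continuous_comp _ _ _ (fun t : 'rV[R]_dx * ('rV[R]_dy * 'rV[R]_dl) => t.2.1) (fun M : 'rV[R]_dy => M 0 j) u).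
      exact: (@continuous_comp _ _ _ snd fst u cvg_snd cvg_fst).
    exact: coord_continuous.
  have c3 j : continuous (fun t : 'rV[R]_dx * ('rV[R]_dy * 'rV[R]_dl) => t.2.2 0 j).
    move=> u; apply: (@continuous_comp _ _ _ (fun t : 'rV[R]_dx * ('rV[R]_dy * 'rV[R]_dl) => t.2.2) (fun M : 'rV[R]_dl => M 0 j) u).
      exact: (@continuous_comp _ _ _ snd snd u cvg_snd cvg_snd).
    exact: coord_continuous.
  have cc (k : R) : continuous (fun _ : 'rV[R]_dx * ('rV[R]_dy * 'rV[R]_dl) => k).
    exact: cst_continuous.
  rewrite /dotr.
  have -> : (fun t : 'rV[R]_dx * ('rV[R]_dy * 'rV[R]_dl) => \sum_(i < dl) t.2.2 0 i * (t.1 *m A^T + t.2.1 *m B^T - c) 0 i) = (fun t => \sum_(i < dl) t.2.2 0 i * (\sum_j t.1 0 j * A^T j i + \sum_j t.2.1 0 j * B^T j i - c 0 i)).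
    by apply: funext => u; apply: eq_bigr => i _; rewrite !mxE.
  apply: cont_sum => i u.
  apply: (@continuousM _ _ (fun t : 'rV[R]_dx * ('rV[R]_dy * 'rV[R]_dl) => t.2.2 0 i)); first exact: c3.
  apply: continuousB; last exact: cc.
  apply: continuousD.
    apply: cont_sum => j v; apply: continuousM; [exact: c1| exact: cc].
  apply: cont_sum => j v; apply: continuousM; [exact: c2| exact: cc].
exact: (@continuousD _ _ _ _ _ t (h1 t) (h2 t)).
Qed.

Theorem mainTheorem2 (R : realType) (dx dy dl : nat)
  (X : set 'rV[R]_dx) (Y : set 'rV[R]_dy) (Lam : set 'rV[R]_dl)
  (fbar : 'rV[R]_dx * 'rV[R]_dy -> R)
  (A : 'M[R]_(dl, dx)) (B : 'M[R]_(dl, dy)) (c : 'rV[R]_dl)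
  (g : 'rV[R]_dy * 'rV[R]_dl -> R)
  (hXne : X !=set0) (hYne : Y !=set0) (hLne : Lam !=set0)
  (hXcvx : cvx_set X) (hYcvx : cvx_set Y) (hLcvx : cvx_set Lam)
  (hXcpt : compact X) (hYcpt : compact Y) (hLcpt : compact Lam)
  (hfC1 : C1 fbar)
  (hfL : grad_lipschitz_on fbar [set p | X p.1 /\ Y p.2])
  (hgC1 : C1 g)
  (hgL : grad_lipschitz_on g [set p | Y p.1 /\ Lam p.2])
  (hgcvx : forall l, Lam l -> cvx_fun (fun y => g (y, l)))
  (rho eps : R) (hrho : 0 < rho) (heps : 0 < eps)
  (xe : 'rV[R]_dx) (ye : 'rV[R]_dy) (le : 'rV[R]_dl) (ze : 'rV[R]_dy)
  (hopt : eps_optimal X Y Lam fbar A B c g rho eps xe ye le ze) :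
  let delta := delta_rho Y Lam fbar A B c g rho xe in
  let PhiS := Phi_star X Y Lam fbar A B c g in
  [/\ Phi Y Lam fbar A B c g xe <= Phi_rho_star X Y Lam fbar A B c g rho + 2 * eps + delta,
      fL fbar A B c xe ye le >= PhiS - 2 * eps - delta &
      h_g Y g ye le <= rho^-1 * (f_hi X Y Lam fbar A B c - PhiS + 2 * eps + delta)].
Proof.
move=> delta PhiS.
case: hopt => -[hx [hy [hl hz]]] h1 h2 h3.
have [Mg [Mg0 HMg]] : exists M : R, 0 <= M /\ forall z, Y z -> `|g (z, le)| <= M.
  apply: cpt_bnd => // u.
  have hp : {for u, continuous (fun z : 'rV[R]_dy => (z, le))}.
    apply: (@cvg_pair _ _ _ (nbhs u) (nbhs u) (nbhs le)); [exact: cvg_id | exact: cvg_cst].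
  exact: (continuous_comp hp (differentiable_continuous (hgC1.1 _))).
have [Mf [Mf0 HMf]] : exists M : R, 0 <= M /\ forall t, (X `*` (Y `*` Lam)) t ->
    `|fL fbar A B c t.1 t.2.1 t.2.2| <= M.
  apply: cpt_bnd; first exact: cont_fL.
  by apply: compact_setX => //; apply: compact_setX.
have Mfb x y l : X x -> Y y -> Lam l -> -Mf <= fL fbar A B c x y l <= Mf.
  move=> Xx Yy Ll; rewrite -ler_norml; exact: (HMf (x, (y, l))).
have Mgb z : Y z -> -Mg <= g (z, le) <= Mg.
  move=> Yz; rewrite -ler_norml; exact: HMg.
set fe := fL fbar A B c xe ye le.
set Psi := Psi_rho Y fbar A B c g rho xe ye le.
set P := P_rho fbar A B c g rho xe ye le ze.
set F := F_rho Y Lam fbar A B c g rho xe.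
set Ph := Phi Y Lam fbar A B c g xe.
set gm := gmin Y g le.
have PsiP z : Y z -> Psi <= P_rho fbar A B c g rho xe ye le z.
  move=> Yz; apply: ge_inf; last by exists z.
  exists (fe - rho * (g (ye, le)) - rho * Mg) => _ [w Yw <-].
  rewrite /P_rho -/fe.
  have := Mgb w Yw; case/andP => hw1 hw2.
  have : - Mg * rho <= g (w, le) * rho by rewrite ler_pM2r.
  lra.
have gmle : gm <= g (ye, le).
  apply: ge_inf; last by exists ye.
  exists (- Mg) => _ [w Yw <-]; by case/andP: (Mgb w Yw).
have PsiA : Psi <= fe - rho * h_g Y g ye le.
  rewrite /h_g -/gm.
  have : (Psi - fe + rho * g (ye, le)) / rho <= gm.
    apply: lb_le_inf; first by case: hYne => z Yz; exists (g (z, le)), z.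
    move=> _ [z Yz <-].
    rewrite ler_pdivrMr //.
    have := PsiP z Yz; rewrite /P_rho -/fe. lra.
  rewrite ler_pdivrMr // => H. lra.
have hgpos : 0 <= h_g Y g ye le by rewrite /h_g -/gm subr_ge0.
have rhog : 0 <= rho * h_g Y g ye le by rewrite mulr_ge0 // ltW.
have fhi : fe <= f_hi X Y Lam fbar A B c.
  apply: ub_le_sup; last by exists (xe, (ye, le)).
  exists Mf => _ [t [Xt [Yt Lt]] <-]; by case/andP: (Mfb _ _ _ Xt Yt Lt).
have PhiSle : PhiS <= Ph.
  apply: ge_inf; last by exists xe.
  exists (- Mf) => _ [x Xx <-].
  case: (pselect ((F_low Y Lam g) !=set0)) => [[p0 Fp0]|nF].
    have [Yp [Lp _]] := Fp0.
    apply: (@le_trans _ _ (fL fbar A B c x p0.1 p0.2)).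
      by case/andP: (Mfb _ _ _ Xx Yp Lp).
    apply: ub_le_sup; last by exists p0.
    exists Mf => _ [p [Yq [Lq _]] <-]; by case/andP: (Mfb _ _ _ Xx Yq Lq).
  rewrite /Phi; have -> : F_low Y Lam g = set0.
    by apply/seteqP; split => // p Fp; apply: nF; exists p.
  by rewrite image_set0 sup0 oppr_le0.
have d1 : Ph - F <= delta by rewrite /delta /delta_rho -/F -/Ph distrC ler_norm.
have d2 : F - Ph <= delta by rewrite /delta /delta_rho -/F -/Ph ler_norm.
move: h1 h2 h3; rewrite -/P -/Psi -/F => h1 h2 h3.
split.
- lra.
- lra.
- have H : rho * h_g Y g ye le <= f_hi X Y Lam fbar A B c - PhiS + 2 * eps + delta by lra.
  rewrite -(ler_pM2l hrho) mulrA mulfV ?mul1r //; exact: lt0r_neq0.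
Qed.
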